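(* Let $(\mathbf{L},\mathbf{R})\in\mathcal{P}_{\mathsf N}$ be superbalanced and suppose it admits a contraction map. Then for all $i,j\in[\mathsf N+1]$, the null reduction on $i$ of the purification on $j$ of $(\mathbf{L},\mathbf{R})$ admits a contraction map (or is empty).
   Context: $\mathcal{P}_{\mathsf N}$ denotes the set of pairs $(\mathbf{L},\mathbf{R})$ of $(0,1)$-matrices, $\mathbf{L}$ of size $(\mathsf N+1)\times m_L$ and $\mathbf{R}$ of size $(\mathsf N+1)\times m_R$, such that some index $p\in[\mathsf N+1]$ has row $p$ of $\mathbf{L}$ and row $p$ of $\mathbf{R}$ both zero. $\mathbf{A}_{(i)}$ denotes the $i$-th row of $\mathbf{A}$; $e$ is the all-ones row vector; $|x-x'|$ is the Hamming distance of bit strings. A contraction map for $(\mathbf{L},\mathbf{R})$ is a map $f:\{0,1\}^{m_L}\to\{0,1\}^{m_R}$ with $f(\mathbf{L}_{(i)})=\mathbf{R}_{(i)}$ for all $i$ and $|x-x'|\ge|f(x)-f(x')|$ for all $x,x'$. The pair is superbalanced if $\mathbf{L}_{(i)}\cdot\mathbf{L}_{(j)}=\mathbf{R}_{(i)}\cdot\mathbf{R}_{(j)}$ for all $i,j$. The purification on $j$ of $(\mathbf{L},\mathbf{R})$ is the pair $(\mathbf{L}+_2 e^T\mathbf{L}_{(j)},\ \mathbf{R}+_2 e^T\mathbf{R}_{(j)})$, where $+_2$ is entrywise addition mod 2; i.e. every column of $\mathbf{L}$ (resp. $\mathbf{R}$) with a $1$ in row $j$ is bit-flipped entirely, and other columns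 are unchanged (row $j$ becomes zero in both). The null reduction on $i$ of a pair keeps exactly the columns of each matrix that have a $1$ in row $i$. *)

(* Defs.v *)
(* (0,1)-matrices are boolean matrices 'M[bool]_(n, m);
   bit strings in {0,1}^m are row vectors 'rV[bool]_m. *)
From mathcomp Require Import all_boot all_algebra.
Set Implicit Arguments. Unset Strict Implicit. Unset Printing Implicit Defensive.

Definition hamming (m : nat) (x y : 'rV[bool]_m) : nat :=
  #|[set k : 'I_m | x ord0 k != y ord0 k]|.

Definition is_contraction_map (n mL mR : nat)
  (L : 'M[bool]_(n, mL)) (R : 'M[bool]_(n, mR))
  (f : 'rV[bool]_mL -> 'rV[bool]_mR) : Prop :=
  (forall i : 'I_n, f (row i L) = row i R) /\
  (forall x x' : 'rV[bool]_mL, hamming (f x) (f x') <= hamming x x').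

Definition admits_contraction_map (n mL mR : nat)
  (L : 'M[bool]_(n, mL)) (R : 'M[bool]_(n, mR)) : Prop :=
  exists f, is_contraction_map L R f.

Definition in_P (N mL mR : nat)
  (L : 'M[bool]_(N.+1, mL)) (R : 'M[bool]_(N.+1, mR)) : Prop :=
  exists p : 'I_N.+1, (forall k, L p k = false) /\ (forall k, R p k = false).

Definition rowdot (n m : nat) (A : 'M[bool]_(n, m)) (i j : 'I_n) : nat :=
  #|[set k : 'I_m | A i k && A j k]|.

Definition superbalanced (n mL mR : nat)
  (L : 'M[bool]_(n, mL)) (R : 'M[bool]_(n, mR)) : Prop :=
  forall i j : 'I_n, rowdot L i j = rowdot R i j.

(* A +_2 e^T A_(j) : every column with a 1 in row j is bit-flipped. *)
Definition purify (n m : nat) (j : 'I_n) (A : 'M[bool]_(n, m)) : 'M[bool]_(n, m) :=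
  \matrix_(r, k) (A r k (+) A j k).

Definition null_cols (n m : nat) (i : 'I_n) (A : 'M[bool]_(n, m)) : {set 'I_m} :=
  [set k | A i k].

(* Null reduction on i: keep exactly the columns with a 1 in row i
   (in their original order). *)
Definition null_reduce (n m : nat) (i : 'I_n) (A : 'M[bool]_(n, m))
  : 'M[bool]_(n, #|null_cols i A|) :=
  \matrix_(r, k) A r (enum_val k).

(* Main.v *)
Require Import Defs.
From mathcomp Require Import all_boot all_algebra.
From mathcomp Require Import zify.
Set Implicit Arguments. Unset Strict Implicit. Unset Printing Implicit Defensive.

Definition sv m (x : 'rV[bool]_m) : {set 'I_m} := [set k | x ord0 k].

Lemma card_sum m (P : 'I_m -> bool) : #|[set k | P k]| = \sum_k (P k : nat).
Proof.
rewrite (eq_bigr (fun k => if P k then 1 else 0)); last by move=> k _; case: (P k).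
by rewrite -big_mkcond /= sum1_card cardsE.
Qed.

Lemma hamE m (x y : 'rV[bool]_m) :
  hamming x y + 2 * #|sv x :&: sv y| = #|sv x| + #|sv y|.
Proof.
rewrite /hamming /sv.
have -> : [set k | x ord0 k] :&: [set k | y ord0 k] = [set k | x ord0 k && y ord0 k].
  by apply/setP=> k; rewrite !inE.
rewrite !card_sum big_distrr /= -!big_split /=; apply: eq_bigr => k _.
by case: (x ord0 k); case: (y ord0 k).
Qed.

Definition xorv m (x y : 'rV[bool]_m) : 'rV[bool]_m := \row_k (x ord0 k (+) y ord0 k).

Lemma ham_xor m (x y c : 'rV[bool]_m) : hamming (xorv x c) (xorv y c) = hamming x y.
Proof.
rewrite /hamming; apply: eq_card => k; rewrite !inE !mxE.
by case: (x ord0 k); case: (y ord0 k); case: (c ord0 k).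
Qed.

Lemma xorvK m (x c : 'rV[bool]_m) : xorv (xorv x c) c = x.
Proof. by apply/rowP=> k; rewrite !mxE; case: (x ord0 k); case: (c ord0 k). Qed.

Lemma row_purify n m (j r : 'I_n) (A : 'M[bool]_(n, m)) :
  row r (purify j A) = xorv (row r A) (row j A).
Proof. by apply/rowP=> k; rewrite !mxE. Qed.

Lemma sv_row0 n m (j : 'I_n) (A : 'M[bool]_(n, m)) :
  (forall k, A j k = false) -> sv (row j A) = set0.
Proof. by move=> H; apply/setP=> k; rewrite !inE mxE H. Qed.

Lemma sv_eq m (x y : 'rV[bool]_m) : sv x = sv y -> x = y.
Proof.
move=> H; apply/rowP=> k.
have := congr1 (fun S : {set 'I_m} => k \in S) H; rewrite /sv !inE.
by [].
Qed.

Definition cs m (S : {set 'I_m}) : nat := #|S|.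
Lemma hamE' m (x y : 'rV[bool]_m) :
  hamming x y + 2 * cs (sv x :&: sv y) = cs (sv x) + cs (sv y).
Proof. exact: hamE. Qed.
Lemma csI m (X Y : {set 'I_m}) : cs (X :&: Y) <= cs X.
Proof. exact: subset_leq_card (subsetIl X Y). Qed.
Lemma cs_eq m (X Y : {set 'I_m}) : X \subset Y -> cs Y <= cs X -> X = Y.
Proof. by move=> s c; apply/eqP; rewrite eqEcard s. Qed.
Lemma cs0 m : cs (set0 : {set 'I_m}) = 0.
Proof. exact: cards0. Qed.

Definition andv m (x y : 'rV[bool]_m) : 'rV[bool]_m := \row_k (x ord0 k && y ord0 k).
Lemma sv_andv m (x y : 'rV[bool]_m) : sv (andv x y) = sv x :&: sv y.
Proof. by apply/setP=> k; rewrite !inE mxE. Qed.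

Lemma key n mA mB (A : 'M[bool]_(n, mA)) (B : 'M[bool]_(n, mB)) (j i r : 'I_n) g :
  is_contraction_map A B g -> (forall k, A j k = false) -> (forall k, B j k = false) ->
  (forall r s, hamming (row r A) (row s A) = hamming (row r B) (row s B)) ->
  g (andv (row r A) (row i A)) = andv (row r B) (row i B).
Proof.
move=> [Hrow Hc] HA HB Hh.
set z := andv _ _; set w := g z.
have H0 := Hc z (row j A); have Ha := Hc z (row i A); have Hr := Hc z (row r A).
rewrite -/w !Hrow in H0 Ha Hr.
have E1 := hamE' w (row j B); have E2 := hamE' z (row j A).
have E3 := hamE' w (row i B); have E4 := hamE' z (row i A).
have E5 := hamE' w (row r B); have E6 := hamE' z (row r A).
have F1 := hamE' (row i A) (row j A); have F2 := hamE' (row i B) (row j B).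
have F3 := hamE' (row r A) (row j A); have F4 := hamE' (row r B) (row j B).
have F5 := hamE' (row r A) (row i A); have F6 := hamE' (row r B) (row i B).
have G1 := Hh i j; have G2 := Hh r j; have G3 := Hh r i.
have svA := sv_row0 HA; have svB := sv_row0 HB.
rewrite svB setI0 cs0 in E1; rewrite svA setI0 cs0 in E2.
rewrite svA setI0 cs0 in F1; rewrite svB setI0 cs0 in F2.
rewrite svA setI0 cs0 in F3; rewrite svB setI0 cs0 in F4.
rewrite sv_andv in E2 E4 E6 *.
have e4 : (sv (row r A) :&: sv (row i A)) :&: sv (row i A) = sv (row r A) :&: sv (row i A).
  by rewrite -setIA setIid.
have e6 : (sv (row r A) :&: sv (row i A)) :&: sv (row r A) = sv (row r A) :&: sv (row i A).
  by rewrite setIC setIA setIid.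
rewrite e4 in E4; rewrite e6 in E6.
set W := sv w in E1 E3 E5 *; set Bi := sv (row i B) in E3 F2 F6 *.
set Br := sv (row r B) in E5 F4 F6 *.
have c1 := csI W Bi.
have c2 := csI W Br.
have eW : W :&: Bi = W.
  apply: cs_eq; [exact: subsetIl | lia].
have sWBi : W \subset Bi by rewrite -eW subsetIr.
have s1 : W :&: Br \subset Br :&: Bi.
  by rewrite subsetI subsetIr /=; exact: subset_trans (subsetIl W Br) sWBi.
have e2 : W :&: Br = Br :&: Bi.
  apply: cs_eq => //; lia.
have e3 : W :&: Br = W.
  apply: cs_eq; [exact: subsetIl | rewrite e2; lia].
apply: sv_eq; rewrite sv_andv -/W -/Br -/Bi -e3 e2 //.
Qed.

Definition ext0 m (S : {set 'I_m}) (y : 'rV[bool]_#|S|) : 'rV[bool]_m :=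
  \row_k [exists t : 'I_#|S|, (enum_val t == k) && y ord0 t].
Definition res m (S : {set 'I_m}) (w : 'rV[bool]_m) : 'rV[bool]_#|S| :=
  \row_t w ord0 (enum_val t).

Lemma ext0E m (S : {set 'I_m}) (y : 'rV[bool]_#|S|) t : ext0 y ord0 (enum_val t) = y ord0 t.
Proof.
rewrite mxE; apply/existsP/idP => [[t' /andP [/eqP E H]]|H].
  by move/enum_val_inj: E => <-.
by exists t; rewrite eqxx.
Qed.
Lemma ext0N m (S : {set 'I_m}) (y : 'rV[bool]_#|S|) k : k \notin S -> ext0 y ord0 k = false.
Proof.
move=> kS; rewrite mxE; apply/existsP => -[t /andP [/eqP E _]].
by move: (enum_valP t); rewrite E (negbTE kS).
Qed.

Lemma ham_res m (S : {set 'I_m}) (w w' : 'rV[bool]_m) :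
  hamming (res S w) (res S w') <= hamming w w'.
Proof.
rewrite /hamming.
rewrite -(card_imset _ (@enum_val_inj _ (mem S))).
apply: subset_leq_card; apply/subsetP=> k /imsetP [t].
by rewrite !inE !mxE => H ->.
Qed.

Lemma ham_ext m (S : {set 'I_m}) (y y' : 'rV[bool]_#|S|) :
  hamming (ext0 y) (ext0 y') <= hamming y y'.
Proof.
rewrite /hamming.
apply: leq_trans (leq_imset_card (@enum_val _ (mem S)) _).
apply: subset_leq_card; apply/subsetP=> k; rewrite inE.
case: (boolP (k \in S)) => kS.
- rewrite -(enum_rankK_in kS kS) !ext0E => H.
  by apply/imsetP; exists (enum_rank_in kS k) => //; rewrite inE.
- by rewrite !ext0N.
Qed.

Lemma row_null n m (i r : 'I_n) (A : 'M[bool]_(n, m)) :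
  row r (null_reduce i A) = res (null_cols i A) (row r A).
Proof. by apply/rowP=> t; rewrite !mxE. Qed.

Lemma ext0_res n m (i : 'I_n) (A : 'M[bool]_(n, m)) (x : 'rV[bool]_m) :
  ext0 (res (null_cols i A) x) = andv x (row i A).
Proof.
apply/rowP=> k; rewrite [in RHS]mxE [row _ _ _ _]mxE.
case: (boolP (k \in null_cols i A)) => kS.
- rewrite -(enum_rankK_in kS kS) ext0E mxE.
  by move: (enum_valP (enum_rank_in kS k)); rewrite inE => ->; rewrite andbT.
- by rewrite ext0N //; move: kS; rewrite inE => /negbTE ->; rewrite andbF.
Qed.

Lemma res_and n m (i : 'I_n) (B : 'M[bool]_(n, m)) (x : 'rV[bool]_m) :
  res (null_cols i B) (andv x (row i B)) = res (null_cols i B) x.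
Proof.
apply/rowP=> t; rewrite !mxE.
by move: (enum_valP t); rewrite inE => ->; rewrite andbT.
Qed.

Lemma null_contr n mA mB (A : 'M[bool]_(n, mA)) (B : 'M[bool]_(n, mB)) (j i : 'I_n) g :
  is_contraction_map A B g -> (forall k, A j k = false) -> (forall k, B j k = false) ->
  (forall r s, hamming (row r A) (row s A) = hamming (row r B) (row s B)) ->
  admits_contraction_map (null_reduce i A) (null_reduce i B).
Proof.
move=> Hg HA HB Hh.
exists (fun y => res (null_cols i B) (g (ext0 y))); split.
- move=> r; rewrite !row_null ext0_res (@key _ _ _ A B j i r g Hg HA HB Hh) res_and //.
- move=> x x'; apply: leq_trans (ham_res _ _ _) _.
  apply: leq_trans (proj2 Hg _ _) _; exact: ham_ext.
Qed.

Lemma rowdot_cs n m (A : 'M[bool]_(n, m)) r s :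
  rowdot A r s = cs (sv (row r A) :&: sv (row s A)).
Proof. by rewrite /rowdot /cs; apply: eq_card => k; rewrite !inE !mxE. Qed.

Lemma rowdot_cs1 n m (A : 'M[bool]_(n, m)) r :
  rowdot A r r = cs (sv (row r A)).
Proof. by rewrite /rowdot /cs; apply: eq_card => k; rewrite !inE !mxE andbb. Qed.

Theorem corollary1 (N mL mR : nat)
  (L : 'M[bool]_(N.+1, mL)) (R : 'M[bool]_(N.+1, mR)) :
  in_P L R ->
  superbalanced L R ->
  admits_contraction_map L R ->
  forall i j : 'I_N.+1,
    admits_contraction_map (null_reduce i (purify j L)) (null_reduce i (purify j R))
    \/ (#|null_cols i (purify j L)| = 0 /\ #|null_cols i (purify j R)| = 0).
Proof.
move=> _ Hsb [f [Hf Hc]] i j; left.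
pose g := fun x => xorv (f (xorv x (row j L))) (row j R).
apply: (@null_contr _ _ _ _ _ j i g).
- split.
  + by move=> r; rewrite /g !row_purify xorvK Hf.
  + by move=> x x'; rewrite /g ham_xor; apply: leq_trans (Hc _ _) _; rewrite ham_xor.
- by move=> k; rewrite mxE addbb.
- by move=> k; rewrite mxE addbb.
- move=> r s; rewrite !row_purify !ham_xor.
  have E1 := hamE' (row r L) (row s L); have E2 := hamE' (row r R) (row s R).
  have := Hsb r s; have := Hsb r r; have := Hsb s s.
  rewrite !rowdot_cs1 !rowdot_cs; lia.
Qed.
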